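(* Let $X$ be a real Hausdorff locally convex topological vector space, let $f:X\to\overline{\mathbb R}$ be proper and let $U\subseteq\operatorname{dom} f$ be dense in $\operatorname{dom} f$. (a) $\overline{f_U}$ is lower semicontinuous, $U$ is graphically dense in $\operatorname{dom}\overline{f_U}$ with respect to $\overline{f_U}$, and $\inf_{x\in U}f(x)=\inf_{x\in X}\overline{f_U}(x)$. (b) If $f$ is lower semicontinuous on $U$, then $f(u)=\overline{f_U}(u)$ for all $u\in U$. If moreover $f$ is lower semicontinuous on $X$, then $\operatorname{dom}\overline{f_U}\subseteq\operatorname{dom} f$ and $\overline{f_U}(x)\ge f(x)$ for all $x\in X$; furthermore, in this case $\overline{f_U}=f$ on $X$ if and only if $U$ is graphically dense in $\operatorname{dom} f$ with respect to $f$. (c) If $\operatorname{dom} f$ is convex, $U$ is self-segment-dense in $\operatorname{dom} f$ and $f$ is convex on $U$, then $\overline{f_U}$ is convex and $\operatorname{epi} f_U$ is self-segment-dense in $\operatorname{epi}\overline{f_U}$.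
   Context: $\overline{\mathbb R}=\mathbb R\cup\{\pm\infty\}$; $\operatorname{dom} f=\{x:f(x)<+\infty\}$; $\operatorname{epi} f=\{(x,r)\in X\times\mathbb R:f(x)\le r\}$; $f$ is proper if $\operatorname{dom} f\ne\emptyset$ and $f>-\infty$ everywhere. For $U\subseteq\operatorname{dom} f$: $\operatorname{epi} f_U=\{(u,r)\in U\times\mathbb R: f(u)\le r\}$ and $\overline{f_U}:X\to\overline{\mathbb R}$ is the function whose epigraph is $\operatorname{cl}(\operatorname{epi} f_U)$ (closure in $X\times\mathbb R$), i.e. $\overline{f_U}(x)=\inf\{r:(x,r)\in\operatorname{cl}(\operatorname{epi} f_U)\}$ with $\inf\emptyset=+\infty$. Lower semicontinuity at $x$: for every net $x_i\to x$, $\liminf f(x_i)\ge f(x)$; ''lower semicontinuous on $U$'' means lower semicontinuous at each point of $U$ (with respect to nets in $U$). Given a function $g$ and $U\subseteq\operatorname{dom} g$, $U$ is graphically dense in $\operatorname{dom} g$ (w.r.t. $g$) if for every $x\in\operatorname{dom} g$ there is a net $(u_i)\subseteq U$ with $u_i\to x$ and $g(u_i)\to g(x)$. $f$ is convex on $U$ if $f((1-t)u+tv)\le(1-t)f(u)+tf(v)$ whenever $u,v\in U$, $t\in[0,1]$ and $(1-t)u+tv\in U$ ($U$ need not be convex). Convexity of $\overline{\mathbb R}$-valued functions uses the conventions $(+\infty)+(-\infty)=+\infty$, $0\cdot(+\infty)=+\infty$, $0\cdot(-\infty)=0$. $[x,y]=\{x+t(y-x):t\in[0,1]\}$. Self-segment-dense: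 for convex $V$ and $U\subseteq V$, $U$ is self-segment-dense in $V$ if $V\subseteq\operatorname{cl}U$ and for all $x,y\in U$, $[x,y]\cap U$ is dense in $[x,y]$. *)

(* Defs.v *)
From Stdlib Require Import Reals Classical ClassicalEpsilon.
Open Scope R_scope.

Inductive ER : Type := ERfin (x : R) | ERpinf | ERninf.

Definition ERle (a b : ER) : Prop :=
  match a, b with
  | ERninf, _ => True
  | _, ERpinf => True
  | ERfin x, ERfin y => x <= y
  | _, _ => False
  end.

Definition ERlt (a b : ER) : Prop := ERle a b /\ a <> b.

(* addition with the convention (+oo) + (-oo) = +oo *)
Definition ERplus (a b : ER) : ER :=
  match a, b with
  | ERpinf, _ => ERpinf
  | _, ERpinf => ERpinf
  | ERninf, _ => ERninf
  | _, ERninf => ERninf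
  | ERfin x, ERfin y => ERfin (x + y)
  end.

(* scalar multiplication by a real, with 0*(+oo) = +oo and 0*(-oo) = 0 *)
Definition ERscal (t : R) (a : ER) : ER :=
  match a with
  | ERfin x => ERfin (t * x)
  | ERpinf => if Req_EM_T t 0 then ERpinf
              else if Rlt_dec 0 t then ERpinf else ERninf
  | ERninf => if Req_EM_T t 0 then ERfin 0
              else if Rlt_dec 0 t then ERninf else ERpinf
  end.

Definition is_glb (S : ER -> Prop) (m : ER) : Prop :=
  (forall s, S s -> ERle m s) /\ (forall m', (forall s, S s -> ERle m' s) -> ERle m' m).
Definition is_lub (S : ER -> Prop) (m : ER) : Prop :=
  (forall s, S s -> ERle s m) /\ (forall m', (forall s, S s -> ERle s m') -> ERle m m').

(* infimum / supremum in the extended reals (they always exist; inf of the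
   empty set is +oo, sup of the empty set is -oo) *)
Definition ERinf (S : ER -> Prop) : ER := epsilon (inhabits ERpinf) (is_glb S).
Definition ERsup (S : ER -> Prop) : ER := epsilon (inhabits ERninf) (is_lub S).

Definition R_open (A : R -> Prop) : Prop :=
  forall x, A x -> exists eps, 0 < eps /\ forall y, Rabs (y - x) < eps -> A y.

Definition prod_open {A B : Type} (opA : (A -> Prop) -> Prop) (opB : (B -> Prop) -> Prop)
  (W : A * B -> Prop) : Prop :=
  forall p, W p -> exists U V, opA U /\ opB V /\ U (fst p) /\ V (snd p) /\
     forall a b, U a -> V b -> W (a, b).

Definition continuous {A B : Type} (opA : (A -> Prop) -> Prop) (opB : (B -> Prop) -> Prop)
  (f : A -> B) : Prop :=
  forall W, opB W -> opA (fun a => W (f a)).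

Definition closure {A : Type} (opA : (A -> Prop) -> Prop) (S : A -> Prop) (p : A) : Prop :=
  forall W, opA W -> W p -> exists q, W q /\ S q.

Record HLCTVS : Type := {
  carrier :> Type;
  vzero : carrier;
  vadd : carrier -> carrier -> carrier;
  vscal : R -> carrier -> carrier;
  vadd_assoc : forall x y z, vadd x (vadd y z) = vadd (vadd x y) z;
  vadd_comm : forall x y, vadd x y = vadd y x;
  vadd_0 : forall x, vadd x vzero = x;
  vadd_opp : forall x, vadd x (vscal (-1) x) = vzero;
  vscal_assoc : forall a b x, vscal a (vscal b x) = vscal (a * b) x;
  vscal_1 : forall x, vscal 1 x = x;
  vscal_distr_l : forall a x y, vscal a (vadd x y) = vadd (vscal a x) (vscal a y);
  vscal_distr_r : forall a b x, vscal (a + b) x = vadd (vscal a x) (vscal b x);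
  vopen : (carrier -> Prop) -> Prop;
  vopen_full : vopen (fun _ => True);
  vopen_inter : forall A B, vopen A -> vopen B -> vopen (fun x => A x /\ B x);
  vopen_union : forall F : (carrier -> Prop) -> Prop,
      (forall A, F A -> vopen A) -> vopen (fun x => exists A, F A /\ A x);
  vadd_cont : continuous (prod_open vopen vopen) vopen (fun p => vadd (fst p) (snd p));
  vscal_cont : continuous (prod_open R_open vopen) vopen (fun p => vscal (fst p) (snd p));
  hausdorff : forall x y, x <> y ->
      exists A B, vopen A /\ vopen B /\ A x /\ B y /\ forall z, ~ (A z /\ B z);
  locally_convex : forall A, vopen A -> A vzero ->
      exists B, vopen B /\ B vzero /\ (forall x, B x -> A x) /\
        (forall x y t, 0 <= t <= 1 -> B x -> B y ->
           B (vadd (vscal (1 - t) x) (vscal t y)))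
}.

Arguments vzero {_}. Arguments vadd {_}. Arguments vscal {_}. Arguments vopen {_}.

Definition directed {I : Type} (le : I -> I -> Prop) : Prop :=
  inhabited I /\ (forall i, le i i) /\ (forall i j k, le i j -> le j k -> le i k) /\
  (forall i j, exists k, le i k /\ le j k).

Definition net_conv {I A : Type} (le : I -> I -> Prop) (opA : (A -> Prop) -> Prop)
  (u : I -> A) (x : A) : Prop :=
  forall W, opA W -> W x -> exists i0, forall i, le i0 i -> W (u i).

Definition ER_net_conv {I : Type} (le : I -> I -> Prop) (a : I -> ER) (l : ER) : Prop :=
  match l with
  | ERfin x => forall eps, 0 < eps -> exists i0, forall i, le i0 i ->
                 exists y, a i = ERfin y /\ Rabs (y - x) < eps
  | ERpinf => forall M, exists i0, forall i, le i0 i -> ERlt (ERfin M) (a i)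
  | ERninf => forall M, exists i0, forall i, le i0 i -> ERlt (a i) (ERfin M)
  end.

Definition net_liminf {I : Type} (le : I -> I -> Prop) (a : I -> ER) : ER :=
  ERsup (fun s => exists i, s = ERinf (fun t => exists j, le i j /\ t = a j)).

Section Notions.
Variable X : HLCTVS.

Definition dom (f : X -> ER) (x : X) : Prop := f x <> ERpinf.

Definition proper (f : X -> ER) : Prop :=
  (exists x, dom f x) /\ (forall x, f x <> ERninf).

Definition XR_open : (X * R -> Prop) -> Prop := prod_open vopen R_open.

Definition epi_U (f : X -> ER) (U : X -> Prop) (p : X * R) : Prop :=
  U (fst p) /\ ERle (f (fst p)) (ERfin (snd p)).

Definition epi (g : X -> ER) (p : X * R) : Prop := ERle (g (fst p)) (ERfin (snd p)).

Definition fbar (f : X -> ER) (U : X -> Prop) (x : X) : ER :=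
  ERinf (fun s => exists r, s = ERfin r /\ closure XR_open (epi_U f U) (x, r)).

Definition lsc_on (f : X -> ER) (U : X -> Prop) : Prop :=
  forall x, U x ->
  forall (I : Type) (le : I -> I -> Prop) (u : I -> X),
    directed le -> (forall i, U (u i)) -> net_conv le vopen u x ->
    ERle (f x) (net_liminf le (fun i => f (u i))).

(* U graphically dense in dom g (w.r.t. g); includes the standing U ⊆ dom g *)
Definition graphically_dense (g : X -> ER) (U : X -> Prop) : Prop :=
  (forall u, U u -> dom g u) /\
  forall x, dom g x ->
    exists (I : Type) (le : I -> I -> Prop) (u : I -> X),
      directed le /\ (forall i, U (u i)) /\ net_conv le vopen u x /\
      ER_net_conv le (fun i => g (u i)) (g x).

Definition convex_on (f : X -> ER) (U : X -> Prop) : Prop :=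
  forall u v t, U u -> U v -> 0 <= t <= 1 ->
    U (vadd (vscal (1 - t) u) (vscal t v)) ->
    ERle (f (vadd (vscal (1 - t) u) (vscal t v)))
         (ERplus (ERscal (1 - t) (f u)) (ERscal t (f v))).

Definition convex_fun (f : X -> ER) : Prop := convex_on f (fun _ => True).

End Notions.

Definition convex_set {A : Type} (add : A -> A -> A) (scal : R -> A -> A)
  (C : A -> Prop) : Prop :=
  forall x y t, C x -> C y -> 0 <= t <= 1 -> C (add (scal (1 - t) x) (scal t y)).

Definition segment {A : Type} (add : A -> A -> A) (scal : R -> A -> A)
  (x y : A) (z : A) : Prop :=
  exists t, 0 <= t <= 1 /\ z = add x (scal t (add y (scal (-1) x))).

Definition self_segment_dense {A : Type} (op : (A -> Prop) -> Prop)
  (add : A -> A -> A) (scal : R -> A -> A) (V U : A -> Prop) : Prop :=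
  convex_set add scal V /\ (forall u, U u -> V u) /\
  (forall v, V v -> closure op U v) /\
  (forall x y, U x -> U y ->
     forall z, segment add scal x y z ->
       closure op (fun w => segment add scal x y w /\ U w) z).

Definition XR_add {X : HLCTVS} (p q : X * R) : X * R :=
  (vadd (fst p) (fst q), snd p + snd q).
Definition XR_scal {X : HLCTVS} (t : R) (p : X * R) : X * R :=
  (vscal t (fst p), t * snd p).

(* Main.v *)
Require Import Defs.
From Stdlib Require Import Reals Lra Lia Classical ClassicalEpsilon FunctionalExtensionality PropExtensionality.
Open Scope R_scope.

Lemma ERle_refl a : ERle a a.
Proof. destruct a; simpl; auto; lra. Qed.

Lemma ERle_trans a b c : ERle a b -> ERle b c -> ERle a c.
Proof. destruct a, b, c; simpl; auto; try tauto; lra. Qed.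

Lemma ERle_antisym a b : ERle a b -> ERle b a -> a = b.
Proof. destruct a, b; simpl; try tauto; intros; f_equal; lra. Qed.

Lemma ERle_pinf a : ERle a ERpinf.
Proof. destruct a; simpl; auto. Qed.

Lemma ERle_ninf a : ERle ERninf a.
Proof. destruct a; simpl; auto. Qed.

Lemma ERle_pinf_eq a : ERle ERpinf a -> a = ERpinf.
Proof. destruct a; simpl; tauto. Qed.

Lemma ERle_ninf_eq a : ERle a ERninf -> a = ERninf.
Proof. destruct a; simpl; tauto. Qed.

Lemma ERle_fin_trans a x y : ERle a (ERfin x) -> x <= y -> ERle a (ERfin y).
Proof. destruct a; simpl; auto; lra. Qed.

Lemma ERfin_trans_le a x y : ERle (ERfin y) a -> x <= y -> ERle (ERfin x) a.
Proof. destruct a; simpl; auto; lra. Qed.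

Lemma ERlt_fin_le a c : ERlt a (ERfin c) -> ERle a (ERfin c).
Proof. intros [H _]; auto. Qed.

Lemma ER_approx a b :
  (forall c, ERlt b (ERfin c) -> ERle a (ERfin c)) -> ERle a b.
Proof.
  intros H. destruct b as [y| |].
  - destruct a as [x| |]; simpl; auto.
    + destruct (Rle_dec x y) as [h|h]; auto.
      assert (Hc := H ((x+y)/2)). simpl in Hc.
      assert ((x+y)/2 <= (x+y)/2 -> x <= (x+y)/2).
      { intros _. apply Hc. split; simpl. lra. intros e; inversion e; lra. }
      lra.
    + apply (H (y+1)). split; simpl. lra. intros e; inversion e; lra.
  - apply ERle_pinf.
  - destruct a as [x| |]; simpl; auto.
    + assert (Hc := H (x-1)). simpl in Hc.
      assert (x <= x - 1). { apply Hc. split; simpl; auto. discriminate. } lra.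
    + apply (H 0). split; simpl; auto. discriminate.
Qed.

Lemma ER_approx2 a b :
  (forall c, ERlt (ERfin c) a -> ERle (ERfin c) b) -> ERle a b.
Proof.
  intros H. destruct a as [x| |].
  - destruct b as [y| |]; simpl; auto.
    + destruct (Rle_dec x y) as [h|h]; auto.
      assert (Hc := H ((x+y)/2)). simpl in Hc.
      assert ((x+y)/2 <= y). { apply Hc. split; simpl. lra. intros e; inversion e; lra. }
      lra.
    + apply (H (x-1)). split; simpl. lra. intros e; inversion e; lra.
  - destruct b as [y| |]; simpl; auto.
    + assert (Hc := H (y+1)). simpl in Hc.
      assert (y + 1 <= y). { apply Hc. split; simpl; auto. discriminate. } lra.
    + apply (H 0). split; simpl; auto. discriminate.
  - apply ERle_ninf.
Qed.

Lemma glb_exists (S : ER -> Prop) : exists m, Defs.is_glb S m.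
Proof.
  destruct (classic (S ERninf)) as [Hn|Hn].
  { exists ERninf. split. intros; apply ERle_ninf.
    intros m' Hm'. apply Hm'. auto. }
  destruct (classic (exists r, S (ERfin r))) as [[r0 Hr0]|Hne].
  - destruct (classic (exists b, forall r, S (ERfin r) -> b <= r)) as [[b Hb]|Hnb].
    + set (E := fun x => S (ERfin (- x))).
      assert (Hbd : bound E). { exists (-b). intros x Hx. unfold E in Hx. apply Hb in Hx. lra. }
      assert (Hex : exists x, E x). { exists (-r0). unfold E. rewrite Ropp_involutive. auto. }
      destruct (completeness E Hbd Hex) as [l [Hl1 Hl2]].
      exists (ERfin (-l)). split.
      * intros s Hs. destruct s as [r| |]; simpl; auto; try contradiction;
        try (assert (E (-r)) by (unfold E; rewrite Ropp_involutive; auto); apply Hl1 in H; lra).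
      * intros m' Hm'. destruct m' as [y| |]; simpl; auto.
        -- assert (l <= -y). { apply Hl2. intros x Hx. apply Hm' in Hx. simpl in Hx. lra. } lra.
        -- apply Hm' in Hr0. simpl in Hr0. auto.
    + exists ERninf. split. intros; apply ERle_ninf.
      intros m' Hm'. destruct m' as [y| |]; simpl; auto.
      * exfalso. apply Hnb. exists y. intros r Hr. apply Hm' in Hr. simpl in Hr. auto.
      * apply Hm' in Hr0. simpl in Hr0. auto.
  - exists ERpinf. split.
    + intros s Hs. destruct s as [r| |]; simpl; auto. exfalso; apply Hne; eauto.
    + intros; apply ERle_pinf.
Qed.

Lemma lub_exists (S : ER -> Prop) : exists m, Defs.is_lub S m.
Proof.
  destruct (classic (S ERpinf)) as [Hn|Hn].
  { exists ERpinf. split. intros; apply ERle_pinf.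
    intros m' Hm'. apply Hm'. auto. }
  destruct (classic (exists r, S (ERfin r))) as [[r0 Hr0]|Hne].
  - destruct (classic (exists b, forall r, S (ERfin r) -> r <= b)) as [[b Hb]|Hnb].
    + set (E := fun x => S (ERfin x)).
      assert (Hbd : bound E). { exists b. intros x Hx. unfold E in Hx. apply Hb in Hx. lra. }
      assert (Hex : exists x, E x). { exists r0. auto. }
      destruct (completeness E Hbd Hex) as [l [Hl1 Hl2]].
      exists (ERfin l). split.
      * intros s Hs. destruct s as [r| |]; simpl; auto; try contradiction;
        try (apply Hl1 in Hs; lra).
      * intros m' Hm'. destruct m' as [y| |]; simpl; auto.
        -- apply Hl2. intros x Hx. apply Hm' in Hx. simpl in Hx. lra.
        -- apply Hm' in Hr0. simpl in Hr0. auto.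
    + exists ERpinf. split. intros; apply ERle_pinf.
      intros m' Hm'. destruct m' as [y| |]; simpl; auto.
      * apply Hnb. exists y. intros r Hr. apply Hm' in Hr. simpl in Hr. auto.
      * apply Hm' in Hr0. simpl in Hr0. auto.
  - exists ERninf. split.
    + intros s Hs. destruct s as [r| |]; simpl; auto. exfalso; apply Hne; eauto.
    + intros; apply ERle_ninf.
Qed.

Lemma ERinf_spec S : Defs.is_glb S (ERinf S).
Proof. unfold ERinf. apply epsilon_spec. apply glb_exists. Qed.

Lemma ERsup_spec S : Defs.is_lub S (ERsup S).
Proof. unfold ERsup. apply epsilon_spec. apply lub_exists. Qed.

Lemma ERinf_lb S s : S s -> ERle (ERinf S) s.
Proof. intros; apply (proj1 (ERinf_spec S)); auto. Qed.

Lemma ERinf_glb S m : (forall s, S s -> ERle m s) -> ERle m (ERinf S).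
Proof. intros; apply (proj2 (ERinf_spec S)); auto. Qed.

Lemma ERsup_ub S s : S s -> ERle s (ERsup S).
Proof. intros; apply (proj1 (ERsup_spec S)); auto. Qed.

Lemma ERsup_lub S m : (forall s, S s -> ERle s m) -> ERle (ERsup S) m.
Proof. intros; apply (proj2 (ERsup_spec S)); auto. Qed.

Lemma liminf_le {I} (le : I -> I -> Prop) (a : I -> ER) c :
  (forall i, ERle (ERinf (fun t => exists j, le i j /\ t = a j)) c) ->
  ERle (net_liminf le a) c.
Proof.
  intros H. unfold net_liminf. apply ERsup_lub. intros s [i ->]. apply H.
Qed.

Lemma le_liminf {I} (le : I -> I -> Prop) (a : I -> ER) c i :
  (forall j, le i j -> ERle c (a j)) -> ERle c (net_liminf le a).
Proof.
  intros H. unfold net_liminf.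
  eapply ERle_trans; [|apply ERsup_ub; exists i; reflexivity].
  apply ERinf_glb. intros s [j [Hj ->]]. auto.
Qed.

Lemma inf_tail_le {I} (le : I -> I -> Prop) (a : I -> ER) i j :
  le i j -> ERle (ERinf (fun t => exists j, le i j /\ t = a j)) (a j).
Proof. intros; apply ERinf_lb; eauto. Qed.

Lemma ERconv_lemma a b t c : 0 <= t <= 1 ->
  ERlt (ERplus (ERscal (1 - t) a) (ERscal t b)) (ERfin c) ->
  exists p q, ERle a (ERfin p) /\ ERle b (ERfin q) /\ (1 - t) * p + t * q <= c.
Proof.
  intros Ht [H Hne].
  destruct a as [x| |], b as [y| |]; simpl in H, Hne |- *;
  repeat (destruct Req_EM_T; simpl in H, Hne |- *);
  repeat (destruct Rlt_dec; simpl in H, Hne |- *); try contradiction; try lra.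
  - exists x, y; repeat split; lra.
  - exists x, 0; repeat split; subst; lra.
  - exists x, ((c - (1-t)*x)/t); repeat split; try lra. field_simplify; lra.
  - exists 0, y; repeat split; lra.
  - exists ((c - t*y)/(1-t)), y; repeat split; try lra. field_simplify; lra.
  - exists 0, c; repeat split; assert (t = 1) by lra; subst; lra.
  - exists (c/(1-t)), 0; repeat split. subst. field_simplify; lra.
  - exists c, c; repeat split; lra.
Qed.
Lemma vadd_0_l {X : HLCTVS} (x : X) : vadd vzero x = x.
Proof. rewrite vadd_comm. apply vadd_0. Qed.

Lemma vscal_comb {X : HLCTVS} a b (x : X) : vadd (vscal a x) (vscal b x) = vscal (a + b) x.
Proof. rewrite vscal_distr_r. reflexivity. Qed.

Lemma vscal_0 {X : HLCTVS} (x : X) : vscal 0 x = vzero.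
Proof.
  assert (H : vscal 0 x = vadd (vscal 0 x) (vscal 0 x)).
  { rewrite <- vscal_distr_r. f_equal. ring. }
  rewrite <- (vadd_0 X (vscal 0 x)).
  rewrite <- (vadd_opp X (vscal 0 x)). rewrite vadd_assoc. rewrite <- H. reflexivity.
Qed.

Lemma vscal_zero {X : HLCTVS} a : vscal a (@vzero X) = vzero.
Proof.
  rewrite <- (vscal_0 (@vzero X)). rewrite vscal_assoc. f_equal. ring.
Qed.

Lemma vscal_eq {X : HLCTVS} a b (x : X) : a = b -> vscal a x = vscal b x.
Proof. intros ->; reflexivity. Qed.

Lemma seg_conv {X : HLCTVS} (u v : X) t :
  vadd u (vscal t (vadd v (vscal (-1) u))) = vadd (vscal (1 - t) u) (vscal t v).
Proof.
  rewrite vscal_distr_l, vscal_assoc.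
  rewrite (vadd_comm X (vscal t v)). rewrite vadd_assoc.
  rewrite <- (vscal_1 X u) at 1. rewrite vscal_comb. f_equal. apply vscal_eq; ring.
Qed.

Lemma vsub_eq0 {X : HLCTVS} (u v : X) : vadd v (vscal (-1) u) = vzero -> v = u.
Proof.
  intros H.
  assert (H1 : vadd (vadd v (vscal (-1) u)) u = v).
  { rewrite <- vadd_assoc. rewrite (vadd_comm X (vscal (-1) u) u), vadd_opp, vadd_0. reflexivity. }
  rewrite H, vadd_0_l in H1. auto.
Qed.

Lemma seg_same {X : HLCTVS} (u : X) t : vadd u (vscal t (vadd u (vscal (-1) u))) = u.
Proof.
  rewrite <- (vscal_1 X u) at 2. rewrite vscal_comb. replace (1 + -1) with 0 by ring.
  rewrite vscal_0, vscal_zero, vadd_0. reflexivity.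
Qed.

Lemma diff_line {X : HLCTVS} (u d : X) t t' :
  vadd (vadd u (vscal t' d)) (vscal (-1) (vadd u (vscal t d))) = vscal (t' - t) d.
Proof.
  rewrite vscal_distr_l, vscal_assoc.
  rewrite (vadd_comm X u (vscal t' d)).
  rewrite <- vadd_assoc. rewrite (vadd_assoc X u).
  rewrite <- (vscal_1 X u) at 1. rewrite vscal_comb. replace (1 + -1) with 0 by ring.
  rewrite vscal_0, vadd_0_l, vscal_comb. apply vscal_eq; ring.
Qed.

Lemma conv_0 {X : HLCTVS} (x y : X) : vadd (vscal (1 - 0) x) (vscal 0 y) = x.
Proof. rewrite vscal_0, vadd_0. replace (1 - 0) with 1 by ring. apply vscal_1. Qed.

Lemma conv_scal0 {X : HLCTVS} (d : X) mu : mu <> 0 ->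
  vadd (vscal (1 - / mu) (@vzero X)) (vscal (/ mu) (vscal mu d)) = d.
Proof.
  intros H. rewrite vscal_zero, vadd_0_l, vscal_assoc.
  replace (/ mu * mu) with 1 by (field; auto). apply vscal_1.
Qed.

Lemma neg_conv {X : HLCTVS} (x y : X) a b :
  vscal (-1) (vadd (vscal a x) (vscal b y)) = vadd (vscal a (vscal (-1) x)) (vscal b (vscal (-1) y)).
Proof. rewrite vscal_distr_l, !vscal_assoc. f_equal; apply vscal_eq; ring. Qed.

Lemma neg_neg {X : HLCTVS} (x : X) : vscal (-1) (vscal (-1) x) = x.
Proof. rewrite vscal_assoc. replace (-1 * -1) with 1 by ring. apply vscal_1. Qed.
Lemma open_of_local {X : HLCTVS} (N : X -> Prop) :
  (forall x, N x -> exists A, vopen A /\ A x /\ forall y, A y -> N y) -> vopen N.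
Proof.
  intros H.
  assert (E : N = (fun x => exists A, (fun A => vopen A /\ forall y, A y -> N y) A /\ A x)).
  { apply functional_extensionality. intros x. apply propositional_extensionality. split.
    - intros Hx. destruct (H x Hx) as [A [HA [HAx HAN]]]. exists A. auto.
    - intros [A [[_ HAN] HAx]]. auto. }
  rewrite E. apply vopen_union. intros A [HA _]; auto.
Qed.

Lemma open_scal {X : HLCTVS} (S : X -> Prop) c : vopen S -> vopen (fun y => S (vscal c y)).
Proof.
  intros HS. apply open_of_local. intros x Hx.
  destruct (vscal_cont X S HS (c, x) Hx) as [V [A [HV [HA [HVc [HAx HVA]]]]]].
  exists A. repeat split; auto. intros y Hy. apply (HVA c y HVc Hy).
Qed.

Lemma open_transl {X : HLCTVS} (S : X -> Prop) w : vopen S -> vopen (fun y => S (vadd y w)).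
Proof.
  intros HS. apply open_of_local. intros x Hx.
  destruct (vadd_cont X S HS (x, w) Hx) as [A [B [HA [HB [HAx [HBw HAB]]]]]].
  exists A. repeat split; auto. intros y Hy. apply (HAB y w Hy HBw).
Qed.

Lemma comb_cont {X : HLCTVS} a b (x y : X) (A : X -> Prop) :
  vopen A -> A (vadd (vscal a x) (vscal b y)) ->
  exists A1 A2, vopen A1 /\ vopen A2 /\ A1 x /\ A2 y /\
    forall x' y', A1 x' -> A2 y' -> A (vadd (vscal a x') (vscal b y')).
Proof.
  intros HA Hxy.
  destruct (vadd_cont X A HA (vscal a x, vscal b y) Hxy) as [B1 [B2 [HB1 [HB2 [H1 [H2 H12]]]]]].
  exists (fun x' => B1 (vscal a x')), (fun y' => B2 (vscal b y')).
  repeat split; auto using open_scal. intros; apply H12; auto.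
Qed.

Lemma R_open_ball c d : R_open (fun b => Rabs (b - c) < d).
Proof.
  intros x Hx. exists (d - Rabs (x - c)). split. lra.
  intros y Hy. pose proof (Rabs_triang (y - x) (x - c)).
  replace (y - x + (x - c)) with (y - c) in H by ring. lra.
Qed.

Lemma R_open_lt c : R_open (fun b => b < c).
Proof.
  intros x Hx. exists (c - x). split. lra.
  intros y Hy. pose proof (Rle_abs (y - x)). lra.
Qed.

Lemma R_open_full : R_open (fun _ => True).
Proof. intros x _. exists 1. split; auto; lra. Qed.

Lemma box_open {X : HLCTVS} (A : X -> Prop) (B : R -> Prop) :
  vopen A -> R_open B -> XR_open X (fun p => A (fst p) /\ B (snd p)).
Proof.
  intros HA HB p [Hp1 Hp2]. exists A, B. repeat split; auto.
Qed.

Lemma XR_open_box {X : HLCTVS} (W : X * R -> Prop) p :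
  XR_open X W -> W p -> exists A d, vopen A /\ A (fst p) /\ 0 < d /\
    forall a b, A a -> Rabs (b - snd p) < d -> W (a, b).
Proof.
  intros HW Hp. destruct (HW p Hp) as [A [B [HA [HB [HA1 [HB1 HAB]]]]]].
  destruct (HB _ HB1) as [d [Hd HdB]].
  exists A, d. repeat split; auto.
Qed.

Lemma closure_incl {A} (op : (A -> Prop) -> Prop) (S : A -> Prop) p : S p -> closure op S p.
Proof. intros Hp W _ HW. exists p; auto. Qed.

Lemma closure_mono {A} (op : (A -> Prop) -> Prop) (S T : A -> Prop) p :
  (forall q, S q -> T q) -> closure op S p -> closure op T p.
Proof. intros H Hp W HW Wp. destruct (Hp W HW Wp) as [q [Hq1 Hq2]]. exists q; auto. Qed.

Lemma closure_idem {A} (op : (A -> Prop) -> Prop) (S : A -> Prop) p :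
  closure op (closure op S) p -> closure op S p.
Proof.
  intros Hp W HW Wp. destruct (Hp W HW Wp) as [q [Hq1 Hq2]]. apply (Hq2 W HW Hq1).
Qed.

Lemma line_nbhd {X : HLCTVS} (u d : X) t eps :
  d <> vzero -> 0 < eps ->
  exists N, vopen N /\ N (vadd u (vscal t d)) /\
    forall t', N (vadd u (vscal t' d)) -> Rabs (t' - t) < eps.
Proof.
  intros Hd Heps.
  destruct (hausdorff X vzero d (fun e => Hd (eq_sym e))) as [A0 [B0 [HA0 [HB0 [HA0z [HB0d Hdis]]]]]].
  destruct (locally_convex X A0 HA0 HA0z) as [B [HB [HBz [HBA Hconv]]]].
  set (S := fun x => B x /\ B (vscal (-1) x)).
  assert (HS : vopen S). { apply vopen_inter; auto. apply open_scal; auto. }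
  assert (Hbig : forall mu, 1 <= mu -> ~ B (vscal mu d)).
  { intros mu Hmu HBm.
    assert (B (vadd (vscal (1 - / mu) vzero) (vscal (/ mu) (vscal mu d)))).
    { apply Hconv; auto. split. left; apply Rinv_0_lt_compat; lra.
      rewrite <- Rinv_1. apply Rinv_le_contravar; lra. }
    rewrite vscal_zero, vadd_0_l, vscal_assoc in H.
    replace (/ mu * mu) with 1 in H by (field; lra). rewrite vscal_1 in H.
    apply (Hdis d). split; auto. }
  assert (Hsmall : forall la, S (vscal la d) -> Rabs la < 1).
  { intros la [H1 H2]. destruct (Rlt_dec (Rabs la) 1) as [h|h]; auto. exfalso.
    destruct (Rle_dec 0 la).
    - rewrite Rabs_right in h by lra. apply (Hbig la); auto; lra.
    - rewrite Rabs_left in h by lra. rewrite vscal_assoc in H2.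
      apply (Hbig (-1 * la)); auto; lra. }
  exists (fun y => S (vscal (/ eps) (vadd y (vscal (-1) (vadd u (vscal t d)))))).
  split; [|split].
  - apply (open_transl (fun x => S (vscal (/ eps) x))). apply open_scal; auto.
  - rewrite vadd_opp, vscal_zero. unfold S. rewrite vscal_zero. auto.
  - intros t' Ht'. rewrite diff_line, vscal_assoc in Ht'.
    apply Hsmall in Ht'. rewrite Rabs_mult, Rabs_inv, (Rabs_right eps) in Ht' by lra.
    apply Rmult_lt_compat_l with (r := eps) in Ht'; auto.
    field_simplify in Ht'; lra.
Qed.

Lemma fbar_lb {X : HLCTVS} f U (x : X) r :
  closure (XR_open X) (epi_U X f U) (x, r) -> ERle (fbar X f U x) (ERfin r).
Proof. intros H. unfold fbar. apply ERinf_lb. exists r. auto. Qed.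

Lemma fbar_glb {X : HLCTVS} f U (x : X) m :
  (forall r, closure (XR_open X) (epi_U X f U) (x, r) -> ERle m (ERfin r)) ->
  ERle m (fbar X f U x).
Proof. intros H. unfold fbar. apply ERinf_glb. intros s [r [-> Hr]]. auto. Qed.

Lemma fbar_le_f {X : HLCTVS} f U (u : X) :
  (forall x, f x <> ERninf) -> U u -> ERle (fbar X f U u) (f u).
Proof.
  intros Hp Hu. destruct (f u) as [y| |] eqn:E.
  - apply fbar_lb. apply closure_incl. split; simpl; auto. rewrite E. simpl; lra.
  - apply ERle_pinf.
  - exfalso; apply (Hp u E).
Qed.

Lemma KL {X : HLCTVS} f U (x : X) c :
  ~ closure (XR_open X) (epi_U X f U) (x, c) ->
  exists A d, vopen A /\ A x /\ 0 < d /\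
    forall y s, A y -> closure (XR_open X) (epi_U X f U) (y, s) -> c + d <= s.
Proof.
  intros Hn. unfold closure in Hn at 1.
  apply not_all_ex_not in Hn. destruct Hn as [W Hn].
  apply imply_to_and in Hn. destruct Hn as [HW Hn].
  apply imply_to_and in Hn. destruct Hn as [HWx Hn].
  destruct (XR_open_box W (x, c) HW HWx) as [A [d [HA [HAx [Hd HAd]]]]]. simpl in *.
  exists A, d. repeat split; auto.
  intros y s Hy Hcl. destruct (Rle_dec (c + d) s) as [h|h]; auto. exfalso.
  destruct (Hcl (fun p => A (fst p) /\ snd p < c + d)) as [[a b] [[Ha Hb] [HUa Hfa]]].
  { apply (box_open A (fun b => b < c + d)); auto. apply R_open_lt. }
  { simpl. split; auto. lra. }
  simpl in *.
  apply Hn. exists (a, Rmax b c). split.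
  - apply HAd; auto. unfold Rmax; destruct (Rle_dec b c);
    rewrite Rabs_right; lra.
  - split; simpl; auto. eapply ERle_fin_trans; eauto. apply Rmax_l.
Qed.

Lemma fbar_nbhd {X : HLCTVS} f U (x : X) c :
  ERlt (ERfin c) (fbar X f U x) ->
  exists A, vopen A /\ A x /\ forall y, A y -> ERle (ERfin c) (fbar X f U y).
Proof.
  intros [H1 H2].
  assert (Hn : ~ closure (XR_open X) (epi_U X f U) (x, c)).
  { intros Hc. apply fbar_lb in Hc. apply H2. apply ERle_antisym; auto. }
  destruct (KL f U x c Hn) as [A [d [HA [HAx [Hd HAd]]]]].
  exists A. repeat split; auto. intros y Hy. apply fbar_glb. intros r Hr.
  simpl. apply HAd in Hr; auto. lra.
Qed.

Lemma epi_fbar_cl {X : HLCTVS} f U (x : X) r :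
  ERle (fbar X f U x) (ERfin r) -> closure (XR_open X) (epi_U X f U) (x, r).
Proof.
  intros H. apply NNPP. intros Hn.
  destruct (KL f U x r Hn) as [A [d [HA [HAx [Hd HAd]]]]].
  assert (ERle (ERfin (r + d)) (fbar X f U x)).
  { apply fbar_glb. intros s Hs. simpl. eapply HAd; eauto. }
  pose proof (ERle_trans _ _ _ H0 H). simpl in H1. lra.
Qed.

Lemma small_inv eps : 0 < eps -> exists N : nat, / INR (S N) < eps.
Proof.
  intros H. destruct (archimed_cor1 eps H) as [N [HN HN0]]. exists N.
  eapply Rle_lt_trans; [|exact HN]. apply Rinv_le_contravar.
  apply lt_0_INR; auto. apply le_INR; lia.
Qed.

Lemma inv_mono (n m : nat) : (n <= m)%nat -> / INR (S m) <= / INR (S n).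
Proof. intros H. apply Rinv_le_contravar. apply lt_0_INR; lia. apply le_INR; lia. Qed.

Lemma inv_pos (n : nat) : 0 < / INR (S n).
Proof. apply Rinv_0_lt_compat. apply lt_0_INR; lia. Qed.

Lemma NetLemma {X : HLCTVS} f U (x : X) (r : nat -> R) :
  (forall n, closure (XR_open X) (epi_U X f U) (x, r n)) ->
  exists (I : Type) (le : I -> I -> Prop) (u : I -> X) (m : I -> nat),
    directed le /\ (forall i, U (u i)) /\ net_conv le vopen u x /\
    (forall i, ERle (f (u i)) (ERfin (r (m i) + / INR (S (m i))))) /\
    (forall N, exists i0, forall i, le i0 i -> (N <= m i)%nat).
Proof.
  intros Hcl.
  set (I := {p : (X -> Prop) * nat | vopen (fst p) /\ fst p x}).
  set (le := fun i j : I => (forall y, fst (proj1_sig j) y -> fst (proj1_sig i) y) /\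
                            (snd (proj1_sig i) <= snd (proj1_sig j))%nat).
  assert (Hex : forall i : I, exists a, U a /\ fst (proj1_sig i) a /\
     ERle (f a) (ERfin (r (snd (proj1_sig i)) + / INR (S (snd (proj1_sig i)))))).
  { intros [[W n] [HW HWx]]. simpl.
    destruct (Hcl n (fun p => W (fst p) /\ (fun b => Rabs (b - r n) < / INR (S n)) (snd p)))
      as [[a b] [[Ha Hb] [HUa Hfa]]].
    - apply (box_open W (fun b => Rabs (b - r n) < / INR (S n))); auto. apply R_open_ball.
    - simpl. split; auto. replace (r n - r n) with 0 by ring. rewrite Rabs_R0. apply inv_pos.
    - simpl in *. exists a. repeat split; auto. eapply ERle_fin_trans; eauto.
      pose proof (Rle_abs (b - r n)). lra. }
  exists I, le, (fun i => proj1_sig (constructive_indefinite_description _ (Hex i))),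
    (fun i => snd (proj1_sig i)).
  split; [|split; [|split; [|split]]].
  - split; [|split; [|split]].
    + constructor. refine (exist _ ((fun _ : X => True), 0%nat) _). simpl. split; auto. apply vopen_full.
    + intros i; split; auto.
    + intros i j k [H1 H2] [H3 H4]. split; auto. lia.
    + intros [[W n] [HW HWx]] [[W' n'] [HW' HWx']].
      assert (Hk : vopen (fst ((fun y => W y /\ W' y), Nat.max n n')) /\
                   fst ((fun y => W y /\ W' y), Nat.max n n') x).
      { simpl. split; auto. apply vopen_inter; auto. }
      exists (exist (fun p : (X -> Prop) * nat => vopen (fst p) /\ fst p x) _ Hk). unfold le; simpl. repeat split; try tauto; lia.
  - intros i. destruct (constructive_indefinite_description _ (Hex i)) as [a [Ha Hb]]. auto.
  - intros W HW HWx.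
    assert (Hk : vopen (fst (W, 0%nat)) /\ fst (W, 0%nat) x) by (simpl; auto).
    exists (exist (fun p : (X -> Prop) * nat => vopen (fst p) /\ fst p x) _ Hk). intros i [Hi _].
    destruct (constructive_indefinite_description _ (Hex i)) as [a [Hb [Ha Hc]]]. simpl in *. auto.
  - intros i. destruct (constructive_indefinite_description _ (Hex i)) as [a [Hb [Hc Ha]]]. auto.
  - intros N.
    assert (Hk : vopen (fst ((fun _ : X => True), N)) /\ fst ((fun _ : X => True), N) x)
      by (simpl; split; auto; apply vopen_full).
    exists (exist (fun p : (X -> Prop) * nat => vopen (fst p) /\ fst p x) _ Hk). intros i [_ Hi]. simpl in Hi. auto.
Qed.

Lemma Cor_lsc {X : HLCTVS} f U (x : X) r :
  closure (XR_open X) (epi_U X f U) (x, r) ->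
  exists (I : Type) (le : I -> I -> Prop) (u : I -> X),
    directed le /\ (forall i, U (u i)) /\ net_conv le vopen u x /\
    ERle (net_liminf le (fun i => f (u i))) (ERfin r).
Proof.
  intros Hcl.
  destruct (NetLemma f U x (fun _ => r) (fun _ => Hcl)) as
    [I [le [u [m [Hdir [HU [Hconv [Hf Hev]]]]]]]].
  exists I, le, u. split; [|split; [|split]]; auto.
  apply liminf_le. intros i. apply ER_approx. intros c [Hc Hne]. simpl in Hc.
  assert (Hrc : r < c) by (destruct Hc; auto; subst; congruence).
  destruct (small_inv (c - r)) as [N HN]; [lra|].
  destruct (Hev N) as [i0 Hi0].
  destruct Hdir as [_ [_ [_ Hjoin]]]. destruct (Hjoin i i0) as [k [Hik Hi0k]].
  eapply ERle_trans. apply inf_tail_le. exact Hik.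
  eapply ERle_fin_trans. apply Hf.
  pose proof (inv_mono _ _ (Hi0 k Hi0k)). lra.
Qed.

Lemma nat_unbounded A : exists N : nat, A < INR N.
Proof.
  destruct (Rle_dec A 0) as [h|h].
  - exists 1%nat. simpl. lra.
  - destruct (small_inv (/ A)) as [N HN]. apply Rinv_0_lt_compat; lra.
    exists (S N). destruct (Rlt_dec A (INR (S N))) as [h'|h']; auto.
    exfalso. assert (/ A <= / INR (S N)). { apply Rinv_le_contravar. apply lt_0_INR; lia. lra. }
    lra.
Qed.

Lemma ERlt_of_le a p M : ERle a (ERfin p) -> p < M -> ERlt a (ERfin M).
Proof.
  intros H HM. split. eapply ERle_fin_trans; eauto; lra.
  intros ->. simpl in H. lra.
Qed.

Lemma part_a1 {X : HLCTVS} f U : lsc_on X (fbar X f U) (fun _ => True).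
Proof.
  intros x _ I le u Hdir _ Hconv. apply ER_approx2. intros c Hc.
  destruct (fbar_nbhd f U x c Hc) as [A [HA [HAx HAy]]].
  destruct (Hconv A HA HAx) as [i0 Hi0].
  apply (le_liminf le _ _ i0). intros j Hj. apply HAy. auto.
Qed.

Lemma join3 {I} (le : I -> I -> Prop) i1 i2 : directed le ->
  exists k, forall i, le k i -> le i1 i /\ le i2 i.
Proof.
  intros [_ [_ [Htr Hj]]]. destruct (Hj i1 i2) as [k [H1 H2]]. exists k.
  intros i Hi. split; eapply Htr; eauto.
Qed.

Lemma part_a2 {X : HLCTVS} f U :
  proper X f -> (forall u, U u -> dom X f u) ->
  graphically_dense X (fbar X f U) U.
Proof.
  intros [_ Hp] HUdom. split.
  - intros u Hu Hb. apply (HUdom u Hu). apply ERle_pinf_eq. rewrite <- Hb.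
    apply fbar_le_f; auto.
  - intros x Hx.
    set (r := fun n : nat => match fbar X f U x with ERfin y => y + / INR (S n) | _ => - INR n end).
    assert (Hcl : forall n, closure (XR_open X) (epi_U X f U) (x, r n)).
    { intros n. apply epi_fbar_cl. unfold r. unfold dom in Hx. pose proof (inv_pos n) as Hn.
      destruct (fbar X f U x) as [y| |]; unfold ERle; auto; lra. }
    destruct (NetLemma f U x r Hcl) as [I [le [u [m [Hdir [HU [Hconv [Hf Hev]]]]]]]].
    exists I, le, u. split; [|split; [|split]]; auto.
    assert (Hfb : forall i, ERle (fbar X f U (u i)) (ERfin (r (m i) + / INR (S (m i))))).
    { intros i. eapply ERle_trans. apply fbar_le_f; auto. apply Hf. }
    unfold r in Hfb. unfold dom in Hx.
    destruct (fbar X f U x) as [y| |] eqn:E; simpl.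
    + intros eps Heps.
      assert (Hc : ERlt (ERfin (y - eps / 2)) (fbar X f U x)).
      { rewrite E. split; simpl. lra. intros e; inversion e; lra. }
      destruct (fbar_nbhd f U x _ Hc) as [A [HA [HAx HAy]]].
      destruct (Hconv A HA HAx) as [i1 Hi1].
      destruct (small_inv (eps / 4)) as [N HN]; [lra|].
      destruct (Hev N) as [i2 Hi2].
      destruct (join3 le i1 i2 Hdir) as [k Hk]. exists k. intros i Hi.
      destruct (Hk i Hi) as [Hk1 Hk2].
      pose proof (HAy _ (Hi1 i Hk1)) as Hlo. pose proof (Hfb i) as Hhi.
      pose proof (inv_mono _ _ (Hi2 i Hk2)).
      destruct (fbar X f U (u i)) as [z| |]; unfold ERle in Hlo, Hhi; try contradiction.
      exists z. split; auto. apply Rabs_def1; lra.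
    + contradiction.
    + intros M.
      destruct (nat_unbounded (1 - M)) as [N HN].
      destruct (Hev N) as [i0 Hi0]. exists i0. intros i Hi.
      apply ERlt_of_le with (p := - INR (m i) + / INR (S (m i))); auto.
      pose proof (le_INR _ _ (Hi0 i Hi)).
      assert (/ INR (S (m i)) <= 1).
      { rewrite <- Rinv_1. apply Rinv_le_contravar. lra. apply (le_INR 1). lia. }
      lra.
Qed.

Lemma part_a3 {X : HLCTVS} f U :
  proper X f ->
  ERinf (fun s => exists u, U u /\ s = f u) =
  ERinf (fun s => exists x, s = fbar X f U x).
Proof.
  intros [_ Hp]. apply ERle_antisym.
  - apply ERinf_glb. intros s [x ->]. apply fbar_glb. intros r Hr.
    apply ER_approx. intros c [Hc Hne]. simpl in Hc.
    destruct (Hr (fun p => (fun _ : X => True) (fst p) /\ (fun b => b < c) (snd p)))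
      as [[a b] [[_ Hb] [Ha Hfa]]].
    + apply (box_open (fun _ : X => True) (fun b => b < c)). apply vopen_full. apply R_open_lt.
    + simpl. split; auto. destruct Hc; auto. subst; congruence.
    + simpl in *. eapply ERle_trans. apply ERinf_lb. exists a; split; eauto.
      eapply ERle_fin_trans; eauto. lra.
  - apply ERinf_glb. intros s [u [Hu ->]].
    eapply ERle_trans. apply ERinf_lb. exists u; reflexivity. apply fbar_le_f; auto.
Qed.

Lemma part_b1 {X : HLCTVS} f U :
  proper X f -> lsc_on X f U -> forall u, U u -> f u = fbar X f U u.
Proof.
  intros [_ Hp] Hlsc u Hu. apply ERle_antisym; [|apply fbar_le_f; auto].
  apply fbar_glb. intros r Hr.
  destruct (Cor_lsc f U u r Hr) as [I [le [v [Hdir [HU [Hconv Hlim]]]]]].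
  eapply ERle_trans; [|exact Hlim]. apply (Hlsc u Hu I le v); auto.
Qed.

Lemma part_b2 {X : HLCTVS} f U :
  lsc_on X f (fun _ => True) -> forall x, ERle (f x) (fbar X f U x).
Proof.
  intros Hlsc x.
  apply fbar_glb. intros r Hr.
  destruct (Cor_lsc f U x r Hr) as [I [le [v [Hdir [HU [Hconv Hlim]]]]]].
  eapply ERle_trans; [|exact Hlim]. apply (Hlsc x Logic.I I le v); auto.
Qed.

Lemma part_b3 {X : HLCTVS} f U :
  proper X f -> (forall u, U u -> dom X f u) -> lsc_on X f (fun _ => True) ->
  ((forall x, fbar X f U x = f x) <-> graphically_dense X f U).
Proof.
  intros Hprop HUdom Hlsc. split.
  - intros H. assert (E : fbar X f U = f) by (apply functional_extensionality; auto).
    rewrite <- E. apply part_a2; auto.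
  - intros [_ Hg] x. apply ERle_antisym; [|apply part_b2; auto].
    destruct (f x) as [y| |] eqn:Efx.
    + apply fbar_lb. intros W HW HWx.
      destruct (XR_open_box W (x, y) HW HWx) as [A [d [HA [HAx [Hd HAd]]]]]. simpl in *.
      assert (Hdx : dom X f x) by (unfold dom; rewrite Efx; discriminate).
      destruct (Hg x Hdx) as [I [le [u [Hdir [HU [Hconv Hfc]]]]]].
      rewrite Efx in Hfc. simpl in Hfc.
      destruct (Hconv A HA HAx) as [i1 Hi1].
      destruct (Hfc d Hd) as [i2 Hi2].
      destruct (join3 le i1 i2 Hdir) as [k Hk].
      assert (Hkk : le k k) by (destruct Hdir as [_ [Hr _]]; auto).
      destruct (Hk k Hkk) as [H1 H2].
      destruct (Hi2 k H2) as [z [Hz1 Hz2]].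
      exists (u k, z). split.
      * apply HAd; auto.
      * split; simpl; auto. rewrite Hz1. simpl; lra.
    + apply ERle_pinf.
    + exfalso. destruct Hprop as [_ Hp]. apply (Hp x Efx).
Qed.

Lemma LL {X : HLCTVS} (U : X -> Prop)
  (Hseg : forall x y, U x -> U y -> forall z, segment vadd vscal x y z ->
            closure vopen (fun w => segment vadd vscal x y w /\ U w) z)
  u v t (A : X -> Prop) eps :
  U u -> U v -> 0 <= t <= 1 -> vopen A ->
  A (vadd u (vscal t (vadd v (vscal (-1) u)))) -> 0 < eps ->
  exists t', 0 <= t' <= 1 /\ Rabs (t' - t) < eps /\
    U (vadd u (vscal t' (vadd v (vscal (-1) u)))) /\
    A (vadd u (vscal t' (vadd v (vscal (-1) u)))).
Proof.
  intros Hu Hv Ht HA HAz Heps.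
  destruct (classic (u = v)) as [Huv|Huv].
  - subst v. exists t. repeat split; try lra.
    + replace (t - t) with 0 by ring. rewrite Rabs_R0; auto.
    + rewrite seg_same; auto.
    + auto.
  - assert (Hd : vadd v (vscal (-1) u) <> vzero).
    { intros H. apply Huv. symmetry. apply vsub_eq0; auto. }
    destruct (line_nbhd u (vadd v (vscal (-1) u)) t eps Hd Heps) as [N [HN [HNz HNt]]].
    destruct (Hseg u v Hu Hv (vadd u (vscal t (vadd v (vscal (-1) u))))
                (ex_intro _ t (conj Ht eq_refl)) (fun y => A y /\ N y))
      as [w [[HAw HNw] [[t' [Ht' ->]] HUw]]].
    + apply vopen_inter; auto.
    + split; auto.
    + exists t'. repeat split; try lra; auto.
Qed.

Lemma SD {X : HLCTVS} f U
  (Hp : forall x, f x <> ERninf)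
  (Hseg : forall x y, U x -> U y -> forall z, segment vadd vscal x y z ->
            closure vopen (fun w => segment vadd vscal x y w /\ U w) z)
  (Hcv : convex_on X f U) :
  forall p q, epi_U X f U p -> epi_U X f U q -> forall z, segment XR_add XR_scal p q z ->
    closure (XR_open X) (fun w => segment XR_add XR_scal p q w /\ epi_U X f U w) z.
Proof.
  intros [u r] [v s] [Hu Hfu] [Hv Hfv] z [t [Ht ->]]. simpl in *.
  intros W HW HWz.
  destruct (XR_open_box W _ HW HWz) as [A [d [HA [HAx [Hd HAd]]]]].
  unfold XR_add, XR_scal in HAx, HAd. simpl in HAx, HAd.
  set (eps := d / (Rabs (s + -1 * r) + 1)).
  assert (Heps : 0 < eps).
  { unfold eps. apply Rdiv_lt_0_compat; auto. pose proof (Rabs_pos (s + -1 * r)); lra. }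
  destruct (LL U Hseg u v t A eps Hu Hv Ht HA HAx Heps) as [t' [Ht' [Htt [HUw HAw]]]].
  exists (vadd u (vscal t' (vadd v (vscal (-1) u))), r + t' * (s + -1 * r)). split.
  - apply HAd; auto.
    replace (r + t' * (s + -1 * r) - (r + t * (s + -1 * r))) with ((t' - t) * (s + -1 * r)) by ring.
    rewrite Rabs_mult.
    assert (Hk : Rabs (t' - t) * (Rabs (s + -1 * r) + 1) < d).
    { unfold eps in Htt. apply Rmult_lt_compat_r with (r := Rabs (s + -1 * r) + 1) in Htt.
      field_simplify in Htt. lra. pose proof (Rabs_pos (s + -1 * r)); lra.
      pose proof (Rabs_pos (s + -1 * r)); lra. }
    pose proof (Rabs_pos (t' - t)). nra.
  - split.
    + exists t'. split; auto.
    + split; simpl; auto.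
      pose proof (Hcv u v t' Hu Hv Ht') as Hc. rewrite seg_conv in HUw. specialize (Hc HUw).
      rewrite <- seg_conv in Hc.
      destruct (f u) as [a| |] eqn:Ea; [|simpl in Hfu; contradiction|exfalso; apply (Hp u Ea)].
      destruct (f v) as [b| |] eqn:Eb; [|simpl in Hfv; contradiction|exfalso; apply (Hp v Eb)].
      simpl in Hc, Hfu, Hfv. eapply ERle_fin_trans; [exact Hc|].
      assert ((1 - t') * a <= (1 - t') * r) by (apply Rmult_le_compat_l; lra).
      assert (t' * b <= t' * s) by (apply Rmult_le_compat_l; lra).
      lra.
Qed.

Lemma XR_seg_conv {X : HLCTVS} (p q : X * R) t :
  XR_add (XR_scal (1 - t) p) (XR_scal t q) = XR_add p (XR_scal t (XR_add q (XR_scal (-1) p))).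
Proof.
  destruct p as [u r], q as [v s]. unfold XR_add, XR_scal; simpl.
  rewrite seg_conv. f_equal. ring.
Qed.

Lemma cl_convex {X : HLCTVS} f U
  (HSD : forall p q, epi_U X f U p -> epi_U X f U q -> forall z, segment XR_add XR_scal p q z ->
    closure (XR_open X) (fun w => segment XR_add XR_scal p q w /\ epi_U X f U w) z) :
  convex_set XR_add XR_scal (closure (XR_open X) (epi_U X f U)).
Proof.
  intros [P1 P2] [Q1 Q2] t HP HQ Ht W HW HWZ.
  destruct (XR_open_box W _ HW HWZ) as [A [d [HA [HAx [Hd HAd]]]]].
  unfold XR_add, XR_scal in HAx, HAd. simpl in HAx, HAd.
  destruct (comb_cont (1 - t) t P1 Q1 A HA HAx) as [A1 [A2 [HA1 [HA2 [HA1x [HA2y HA12]]]]]].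
  destruct (HP (fun p => A1 (fst p) /\ (fun b => Rabs (b - P2) < d / 2) (snd p)))
    as [[a1 b1] [[Ha1 Hb1] Hp1]].
  { apply (box_open A1 (fun b => Rabs (b - P2) < d / 2)); auto. apply R_open_ball. }
  { simpl. split; auto. replace (P2 - P2) with 0 by ring. rewrite Rabs_R0. lra. }
  destruct (HQ (fun p => A2 (fst p) /\ (fun b => Rabs (b - Q2) < d / 2) (snd p)))
    as [[a2 b2] [[Ha2 Hb2] Hp2]].
  { apply (box_open A2 (fun b => Rabs (b - Q2) < d / 2)); auto. apply R_open_ball. }
  { simpl. split; auto. replace (Q2 - Q2) with 0 by ring. rewrite Rabs_R0. lra. }
  simpl in *.
  assert (HZ' : closure (XR_open X) (epi_U X f U)
                  (XR_add (XR_scal (1 - t) (a1, b1)) (XR_scal t (a2, b2)))).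
  { eapply closure_mono; [|apply (HSD _ _ Hp1 Hp2)]. intros w [_ Hw]; auto.
    exists t. split; auto. rewrite XR_seg_conv. reflexivity. }
  apply HZ'; auto.
  unfold XR_add, XR_scal; simpl. apply HAd; auto.
  apply Rabs_def2 in Hb1. apply Rabs_def2 in Hb2. apply Rabs_def1.
  - assert ((1 - t) * (b1 - P2) <= (1 - t) * (d / 2)) by (apply Rmult_le_compat_l; lra).
    assert (t * (b2 - Q2) <= t * (d / 2)) by (apply Rmult_le_compat_l; lra).
    lra.
  - assert ((1 - t) * (- (d / 2)) <= (1 - t) * (b1 - P2)) by (apply Rmult_le_compat_l; lra).
    assert (t * (- (d / 2)) <= t * (b2 - Q2)) by (apply Rmult_le_compat_l; lra).
    lra.
Qed.

Lemma part_c {X : HLCTVS} f U :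
  proper X f ->
  self_segment_dense vopen vadd vscal (dom X f) U ->
  convex_on X f U ->
  convex_fun X (fbar X f U) /\
  self_segment_dense (XR_open X) XR_add XR_scal (epi X (fbar X f U)) (epi_U X f U).
Proof.
  intros [_ Hp] [_ [_ [_ Hseg]]] Hcv.
  pose proof (SD f U Hp Hseg Hcv) as HSD.
  pose proof (cl_convex f U HSD) as Hcc.
  split.
  - intros u v t _ _ Ht _. apply ER_approx. intros c Hc.
    destruct (ERconv_lemma _ _ t c Ht Hc) as [p [q [Hup [Hvq Hpq]]]].
    apply epi_fbar_cl in Hup. apply epi_fbar_cl in Hvq.
    pose proof (Hcc _ _ t Hup Hvq Ht) as H. unfold XR_add, XR_scal in H; simpl in H.
    apply fbar_lb in H. eapply ERle_fin_trans; eauto.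
  - split; [|split; [|split]].
    + intros [x r] [y s] t Hx Hy Ht. unfold epi in *. simpl in Hx, Hy.
      apply epi_fbar_cl in Hx. apply epi_fbar_cl in Hy.
      pose proof (Hcc _ _ t Hx Hy Ht) as H. unfold XR_add, XR_scal in H |- *; simpl in H |- *.
      apply fbar_lb in H. auto.
    + intros [x r] Hxr. unfold epi; simpl. apply fbar_lb. apply closure_incl. auto.
    + intros [x r] Hxr. unfold epi in Hxr; simpl in Hxr. apply epi_fbar_cl. auto.
    + apply HSD.
Qed.

Theorem mainTheorem4 (X : HLCTVS) (f : X -> ER) (U : X -> Prop)
  (Hproper : proper X f)
  (HUdom : forall u, U u -> dom X f u)
  (HUdense : forall x, dom X f x -> closure vopen U x) :
  (* (a) *)
  (lsc_on X (fbar X f U) (fun _ => True) /\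
   graphically_dense X (fbar X f U) U /\
   ERinf (fun s => exists u, U u /\ s = f u) =
   ERinf (fun s => exists x, s = fbar X f U x)) /\
  (* (b) *)
  (lsc_on X f U ->
     (forall u, U u -> f u = fbar X f U u) /\
     (lsc_on X f (fun _ => True) ->
        (forall x, dom X (fbar X f U) x -> dom X f x) /\
        (forall x, ERle (f x) (fbar X f U x)) /\
        ((forall x, fbar X f U x = f x) <-> graphically_dense X f U))) /\
  (* (c) *)
  (convex_set vadd vscal (dom X f) ->
   self_segment_dense vopen vadd vscal (dom X f) U ->
   convex_on X f U ->
     convex_fun X (fbar X f U) /\
     self_segment_dense (XR_open X) XR_add XR_scal (epi X (fbar X f U)) (epi_U X f U)).
Proof.
  split; [|split].
  - split; [apply part_a1|split; [apply part_a2; auto|apply part_a3; auto]].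
  - intros Hlsc. split; [apply part_b1; auto|].
    intros Hlsc2. split; [|split].
    + intros x Hd Hf. apply Hd. apply ERle_pinf_eq. rewrite <- Hf. apply part_b2; auto.
    + apply part_b2; auto.
    + apply part_b3; auto.
  - intros _ Hssd Hcv. apply part_c; auto.
Qed.
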